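(* Assume the standing setting below. Let $\alpha\in(0,1/6]$ with $\alpha n$ an integer, let $P_1,P_2\subseteq X$ be disjoint with $|P_1|=|P_2|=\alpha n$, let $T\subseteq X$ be nonempty, and set $\psi:=\frac{1}{3\alpha}R_{2\alpha(k+1)\phi_\alpha}(P_2,T)$. Define $F_b:=\mathrm{far}_{k\phi_\alpha}(X\setminus P_1,T)$, let $\mathcal{B}_b$ be a $(\phi_\alpha/3)$-linear bin division of $(X\setminus P_1)\setminus F_b$ with respect to $T$; define $F_c:=\mathrm{far}_{4(k+1)\phi_\alpha}(X\setminus P_1,T)$ and let $\mathcal{B}_c$ be a $(\phi_\alpha/3)$-linear bin division of $(X\setminus P_1)\setminus F_c$ with respect to $T$. (a) If each of $F_b$ and $\mathcal{B}_b$ is trivial or well-represented in $P_2$ for $X\setminus P_1$, then $\psi\le R_{k\phi_\alpha}(X,T)$. (b) If each of $F_c$ and $\mathcal{B}_c$ is trivial or well-represented in $P_2$ for $X\setminus P_1$, then $\frac19 R_{5(k+1)\phi_\alpha}(X\setminus P_1,T)\le\psi$.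
   Context: Standing setting: $(X,\rho)$ is a finite metric space with $|X|=n$; $k\ge2$ is an integer and $\delta\in(0,1)$; $\log$ is the natural logarithm; for $\alpha>0$, $\phi_\alpha:=150\log(32k/\delta)/\alpha$. For nonempty $T\subseteq X$, $\rho(x,T):=\min_{y\in T}\rho(x,y)$ and $R(S,T):=\sum_{x\in S}\rho(x,T)$; ties are broken by a fixed ordering of $X$. For $S\subseteq X$ and real $r\ge0$, $\mathrm{far}_r(S,T)$ is the set of the $\lceil r\rceil$ points of $S$ furthest from $T$ (ties broken by the fixed ordering); if $|S|<r$, $\mathrm{far}_r(S,T):=S$ and it is called a trivial far set. $R_r(S,T):=R(S\setminus\mathrm{far}_r(S,T),T)$. For finite $W$, $A,B\subseteq W$, $B$ is well-represented in $A$ for $W$ if $|B\cap A|/|B|\in[r/2,\frac32 r]$ with $r=|A|/|W|$; a bin division is well-represented if all its bins are. A $z$-linear bin division ($z>0$) of $W$ with respect to $T$ is a partition $(\mathcal{B}(1),\ldots,\mathcal{B}(L))$ of $W$ with: (1) if $z\le|W|$, $|\mathcal{B}(i)|\ge z(i+1)/2$ for all $i$; otherwise it is trivial, $\mathcal{B}(1):=W$; (2) $|\mathcal{B}(1)|\le\frac52 z$; (3) $|\mathcal{B}(i+1)|/|\mathcal{B}(i)|\le3/2$; (4) $\rho(x,T)\ge\rho(x',T)$ whenever $x\in\mathcal{B}(i)$, $x'\in\mathcal{B}(i+1)$. *)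

(* Defs.v *)
From HB Require Import structures.
From mathcomp Require Import all_boot all_order all_algebra.
From mathcomp Require Import reals exp.
Set Implicit Arguments. Unset Strict Implicit. Unset Printing Implicit Defensive.
Import Order.TTheory GRing.Theory Num.Theory.
Local Open Scope ring_scope.

Section Defs.
Variables (R : realType) (X : finType).

Definition is_metric (rho : X -> X -> R) : Prop :=
  [/\ forall x y, 0 <= rho x y,
      forall x y, rho x y = 0 <-> x = y,
      forall x y, rho x y = rho y x
    & forall x y z, rho x z <= rho x y + rho y z].

(* rho(x,T) = min_{y in T} rho(x,y)  (T nonempty; 0 by convention otherwise) *)
Definition distT (rho : X -> X -> R) (x : X) (T : {set X}) : R :=
  match [pick y in T] with
  | Some y0 => \big[Num.min/rho x y0]_(y in T) rho x y
  | None => 0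
  end.

Definition Rcost (rho : X -> X -> R) (S T : {set X}) : R :=
  \sum_(x in S) distT rho x T.

Definition further (rho : X -> X -> R) (ord : X -> nat) (T : {set X}) (y x : X) : bool :=
  (distT rho x T < distT rho y T) || ((distT rho y T == distT rho x T) && (ord y < ord x)%N).

(* far_r(S,T): the ceil(r) points of S furthest from T (all of S if |S| < r) *)
Definition far (rho : X -> X -> R) (ord : X -> nat) (r : R) (S T : {set X}) : {set X} :=
  if (#|S|%:R < r) then S
  else [set x in S | (#|[set y in S | further rho ord T y x]|%:Z < Num.ceil r)%R].

Definition far_trivial (r : R) (S : {set X}) : bool := (#|S|%:R < r).

Definition Rr (rho : X -> X -> R) (ord : X -> nat) (r : R) (S T : {set X}) : R :=
  Rcost rho (S :\: far rho ord r S T) T.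

Definition well_rep (W A B : {set X}) : bool :=
  let r : R := #|A|%:R / #|W|%:R in
  (r / 2 <= #|B :&: A|%:R / #|B|%:R) && (#|B :&: A|%:R / #|B|%:R <= 3%:R / 2 * r).

(* bins = [:: B(1); ...; B(L)], so B(i+1) = nth set0 bins i *)
Definition linear_bin_division (rho : X -> X -> R) (z : R) (W T : {set X})
  (bins : seq {set X}) : Prop :=
  let B := fun i => nth set0 bins i in
  (\bigcup_(b <- bins) b = W) /\
  (forall i j, (i < j < size bins)%N -> [disjoint B i & B j]) /\
      (z <= #|W|%:R -> forall i, (i < size bins)%N -> z * (i.+2)%:R / 2 <= #|B i|%:R) /\
  (#|W|%:R < z -> bins = [:: W]) /\
  ((0 < size bins)%N /\ #|B 0%N|%:R <= 5%:R / 2 * z) /\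
  (forall i, (i.+1 < size bins)%N -> (#|B i.+1|%:R / #|B i|%:R : R) <= 3%:R / 2) /\
  (forall i x x', (i.+1 < size bins)%N -> x \in B i -> x' \in B i.+1 ->
         distT rho x' T <= distT rho x T).

Definition bin_trivial (z : R) (W : {set X}) : bool := (#|W|%:R < z).

Definition bins_well_rep (W A : {set X}) (bins : seq {set X}) : bool :=
  all (well_rep W A) bins.

Definition phi (k : nat) (delta alpha : R) : R :=
  150%:R * ln (32%:R * k%:R / delta) / alpha.

End Defs.

(* Main.v *)
Require Import Defs.
From HB Require Import structures.
From mathcomp Require Import all_boot all_order all_algebra.
From mathcomp Require Import reals exp.
From mathcomp Require Import lra.
Set Implicit Arguments. Unset Strict Implicit. Unset Printing Implicit Defensive.
Import Order.TTheory GRing.Theory Num.Theory.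
Local Open Scope ring_scope.

Section Aux.
Variables (R : realType) (X : finType) (rho : X -> X -> R) (ord : X -> nat) (T : {set X}).
Hypothesis ordI : injective ord.
Local Notation D x := (distT rho x T).
Local Notation fur := (further rho ord T).

Lemma fur_irr x : ~~ fur x x.
Proof. by rewrite /further ltxx eqxx ltnn. Qed.

Lemma fur_le y x : fur y x -> D x <= D y.
Proof. by rewrite /further => /orP[/ltW//|/andP[/eqP-> _]]. Qed.

Lemma fur_trans a b c : fur a b -> fur b c -> fur a c.
Proof.
rewrite /further => /orP[h1|/andP[/eqP e1 h1]] /orP[h2|/andP[/eqP e2 h2]].
- by rewrite (lt_trans h2 h1).
- by rewrite -e2 h1.
- by rewrite e1 h2.
- by rewrite e1 e2 eqxx (ltn_trans h1 h2) orbT.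
Qed.

Lemma fur_total x y : x != y -> fur x y || fur y x.
Proof.
move=> nxy; rewrite /further.
case: (ltgtP (D x) (D y)) => //= e.
have : ord x != ord y by apply: contra nxy => /eqP /ordI ->.
by case: ltngtP.
Qed.

Definition rk (S : {set X}) x := #|[set y in S | fur y x]|.

Lemma rk_lt (S : {set X}) x y : y \in S -> fur y x -> (rk S y < rk S x)%N.
Proof.
move=> yS fyx; apply: proper_card; apply/properP; split.
  by apply/subsetP => z; rewrite !inE => /andP[-> h] /=; apply: fur_trans h fyx.
exists y; first by rewrite inE yS fyx.
by rewrite inE (negbTE (fur_irr y)) andbF.
Qed.

Lemma rk_ltS (S : {set X}) x : x \in S -> (rk S x < #|S|)%N.
Proof.
move=> xS; apply: proper_card; apply/properP; split.
  by apply/subsetP => z; rewrite !inE => /andP[].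
by exists x; rewrite // inE (negbTE (fur_irr x)) andbF.
Qed.

Lemma rk_inj (S : {set X}) : {in S &, injective (rk S)}.
Proof.
move=> x y xS yS e; apply/eqP; apply: contraT => nxy.
case/orP: (fur_total nxy) => h.
  by move: (rk_lt xS h); rewrite e ltnn.
by move: (rk_lt yS h); rewrite e ltnn.
Qed.

Lemma rk_sub (S S' : {set X}) x : S \subset S' -> (rk S x <= rk S' x)%N.
Proof.
move=> sS; apply: subset_leq_card; apply/subsetP => z; rewrite !inE => /andP[h ->].
by rewrite (subsetP sS).
Qed.

Definition rset (S : {set X}) m := [set x in S | (rk S x < m)%N].

Lemma rset_le (S : {set X}) m : (#|rset S m| <= m)%N.
Proof.
case: m => [|m].
  by rewrite leqn0 cards_eq0; apply/eqP/setP => x; rewrite !inE ltn0 andbF.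
have := @leq_card_in _ _ (fun x => (inord (rk S x) : 'I_m.+1)) (rset S m.+1).
rewrite card_ord; apply => x y; rewrite !inE => /andP[xS xm] /andP[yS ym] e.
apply: (rk_inj xS yS).
by have := congr1 val e; rewrite /= !inordK.
Qed.

Lemma rset_ge (S : {set X}) m : (minn m #|S| <= #|rset S m|)%N.
Proof.
rewrite leqNgt; apply/negP => h.
have h1 : (#|rset S m| < m)%N by move: h; rewrite leq_min => /andP[].
have h2 : (#|rset S m| < #|S|)%N by move: h; rewrite leq_min => /andP[].
have [x0 x0S] : exists x, x \in S :\: rset S m.
  apply/set0Pn; rewrite -card_gt0 cardsD.
  have -> : S :&: rset S m = rset S m.
    by apply/setIidPr/subsetP => z; rewrite !inE => /andP[].
  by rewrite subn_gt0.
case: (@arg_minnP _ x0 (fun x => x \in S :\: rset S m) (rk S) x0S) => x xSF xmin.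
have sub : [set y in S | fur y x] \subset rset S m.
  apply/subsetP => y; rewrite !inE => /andP[yS fyx].
  rewrite yS /=; apply: contraT; rewrite -leqNgt => my.
  have yF : y \in S :\: rset S m by rewrite !inE yS /= -leqNgt my.
  by move: (xmin y yF); rewrite leqNgt (rk_lt yS fyx).
move: xSF; rewrite inE => /andP[nin xS]; case/negP: nin.
rewrite /rset inE xS /=.
exact: leq_ltn_trans (subset_leq_card sub) h1.
Qed.


Lemma ceilN (r : R) : 0 <= r -> (`|Num.ceil r|%N%:Z = Num.ceil r).
Proof. by move=> r0; rewrite gez0_abs // ceil_ge0 (lt_le_trans _ r0) // ltrN10. Qed.

Lemma ceilN_ge (r : R) : 0 <= r -> r <= (`|Num.ceil r|%N)%:R.
Proof. by move=> r0; rewrite -[_%:R]/((`|Num.ceil r|%N%:Z)%:~R) ceilN // ceil_ge. Qed.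

Lemma ceilN_lt (r : R) : 0 <= r -> (`|Num.ceil r|%N)%:R < r + 1.
Proof.
move=> r0; rewrite -[_%:R]/((`|Num.ceil r|%N%:Z)%:~R) ceilN //.
by rewrite -ltrBlDr -[1]/(1%:~R) -intrB ceilB1_lt.
Qed.

Lemma ceilN_le (r : R) (a : nat) : 0 <= r -> r <= a%:R -> (`|Num.ceil r| <= a)%N.
Proof.
move=> r0 ra; rewrite -lez_nat ceilN // ceil_le_int //.
Qed.

Lemma far_sub (r : R) (S : {set X}) : far rho ord r S T \subset S.
Proof.
rewrite /far; case: ifP => _ //.
by apply/subsetP => x; rewrite inE => /andP[].
Qed.

Lemma far_tr (r : R) (S : {set X}) : #|S|%:R < r -> far rho ord r S T = S.
Proof. by rewrite /far => ->. Qed.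

Lemma far_nt (r : R) (S : {set X}) : 0 <= r -> ~~ (#|S|%:R < r) ->
  far rho ord r S T = rset S `|Num.ceil r|.
Proof.
move=> r0 nt; rewrite /far (negbTE nt); apply/setP => x.
by rewrite !inE -(ceilN r0) ltz_nat.
Qed.

Lemma far_card_ge (r : R) (S : {set X}) : 0 <= r -> (minn `|Num.ceil r| #|S| <= #|far rho ord r S T|)%N.
Proof.
move=> r0; case: (boolP (#|S|%:R < r)) => h.
  by rewrite far_tr // geq_minr.
by rewrite far_nt //; apply: rset_ge.
Qed.

Lemma far_card_le (r : R) (S : {set X}) : 0 <= r -> ~~ (#|S|%:R < r) ->
  (#|far rho ord r S T| <= `|Num.ceil r|)%N.
Proof. by move=> r0 h; rewrite far_nt //; apply: rset_le. Qed.

Lemma far_dom (r : R) (S : {set X}) y x : y \in far rho ord r S T -> x \in S :\: far rho ord r S T -> fur y x.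
Proof.
rewrite /far; case: ifP => _; first by move=> _; rewrite inE andNb.
rewrite !inE => /andP[yS ry] /andP[nx xS].
have nxy : y != x by apply: contraNneq nx => <-; rewrite yS.
case/orP: (fur_total nxy) => // fxy.
move: nx; rewrite xS /= => /negP; case.
apply: lt_trans ry; rewrite ltz_nat; exact: rk_lt xS fxy.
Qed.

Lemma far_notin (r : R) (S : {set X}) x : 0 <= r -> ~~ (#|S|%:R < r) -> (`|Num.ceil r| <= rk S x)%N ->
  x \notin far rho ord r S T.
Proof. by move=> r0 nt h; rewrite far_nt // inE ltnNge h andbF. Qed.

Lemma far_all (r : R) (S : {set X}) : 0 <= r -> (#|S| <= `|Num.ceil r|)%N -> far rho ord r S T = S.
Proof.
move=> r0 h; case: (boolP (#|S|%:R < r)) => nt; first exact: far_tr.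
rewrite far_nt //; apply/setP => x; rewrite inE.
case xS: (x \in S) => //=; exact: leq_trans (rk_ltS xS) h.
Qed.


Lemma sumG (U V : {set X}) (f : X -> R) :
  (forall x y, x \in U -> y \in V -> f x <= f y) ->
  #|V|%:R * (\sum_(x in U) f x) <= #|U|%:R * (\sum_(y in V) f y).
Proof.
move=> H; rewrite !mulr_natl -sumr_const -sumrMnl.
apply: ler_sum => y yV; rewrite -sumr_const; apply: ler_sum => x xU; exact: H.
Qed.

Hypothesis D0 : forall x, 0 <= D x.

Lemma sum_splitS (S A : {set X}) (f : X -> R) : A \subset S ->
  \sum_(x in S) f x = \sum_(x in A) f x + \sum_(x in S :\: A) f x.
Proof. by move=> AS; rewrite (big_setID A) (setIidPr AS). Qed.

Lemma sum_sub (A S : {set X}) : A \subset S -> \sum_(x in A) D x <= \sum_(x in S) D x.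
Proof.
move=> AS; rewrite (sum_splitS _ AS) lerDl; exact: sumr_ge0.
Qed.

Lemma sum_exch (S A : {set X}) r : A \subset S -> (#|A| <= #|far rho ord r S T|)%N ->
  \sum_(x in S :\: far rho ord r S T) D x <= \sum_(x in S :\: A) D x.
Proof.
set F := far rho ord r S T => AS hc.
have FS : F \subset S by apply: far_sub.
suff : \sum_(x in A) D x <= \sum_(x in F) D x.
  have := sum_splitS (fun x => D x) FS; have := sum_splitS (fun x => D x) AS.
  move=> e1 e2 h; lra.
rewrite (big_setID F) [X in _ <= X](big_setID A) setIC lerD2l.
have hU : (#|A :\: F| <= #|F :\: A|)%N.
  by rewrite !cardsD setIC leq_sub2r.
have H := @sumG (A :\: F) (F :\: A) (fun x => D x).
have H' : #|F :\: A|%:R * \sum_(x in A :\: F) D x <= #|A :\: F|%:R * \sum_(y in F :\: A) D y.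
  apply: H => x y; rewrite !inE => /andP[xF xA] /andP[yA yF].
  apply: fur_le; apply: (far_dom yF); rewrite inE xF /=; exact: (subsetP AS).
case: (posnP #|F :\: A|) => h0.
  move: hU; rewrite h0 leqn0 cards_eq0 => /eqP ->.
  by rewrite big_set0 sumr_ge0.
have hpos : (0 : R) < #|F :\: A|%:R by rewrite ltr0n.
rewrite -(ler_pM2l hpos); apply: (le_trans H').
by rewrite ler_wpM2r ?sumr_ge0 // ler_nat.
Qed.


Lemma bins_sum (W : {set X}) (bins : seq {set X}) (f : X -> R) :
  \bigcup_(b <- bins) b = W ->
  (forall i j, (i < j < size bins)%N -> [disjoint nth set0 bins i & nth set0 bins j]) ->
  \sum_(x in W) f x = \sum_(i < size bins) \sum_(x in nth set0 bins i) f x.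
Proof.
move=> HU HD.
have memW x : (x \in W) = [exists i : 'I_(size bins), x \in nth set0 bins i].
  rewrite -HU (big_nth set0) big_mkord.
  by apply/bigcupP/existsP => [[i _ h]|[i h]]; exists i.
have dis (i j : 'I_(size bins)) x : i != j -> x \in nth set0 bins i -> x \notin nth set0 bins j.
  move=> nij xi; case: (ltngtP i j) => h.
  - by rewrite (disjointFr (HD i j _) xi) // h ltn_ord.
  - by rewrite (disjointFl (HD j i _) xi) // h ltn_ord.
  - by case/eqP: nij; apply: val_inj.
rewrite [RHS](eq_bigr (fun i : 'I_(size bins) => \sum_x (if x \in nth set0 bins i then f x else 0))); last by move=> i _; rewrite big_mkcond.
rewrite exchange_big [LHS]big_mkcond /=; apply: eq_bigr => x _.
case: ifP => xW.
- move: xW; rewrite memW => /existsP[i xi].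
  rewrite (bigD1 i) //= xi big1 ?addr0 // => j nji; rewrite ifF //.
  by apply/negbTE; apply: dis xi; rewrite eq_sym.
- rewrite big1 // => i _; rewrite ifF //.
  by apply/negbTE; apply: contraFN xW => xi; rewrite memW; apply/existsP; exists i.
Qed.


Lemma sumI (W P : {set X}) (f : X -> R) :
  \sum_(x in W :&: P) f x = \sum_(x in W) (if x \in P then f x else 0).
Proof. by rewrite -big_mkcondr; apply: eq_bigl => x; rewrite inE. Qed.

Lemma bins_sumI (W P : {set X}) (bins : seq {set X}) (f : X -> R) :
  \bigcup_(b <- bins) b = W ->
  (forall i j, (i < j < size bins)%N -> [disjoint nth set0 bins i & nth set0 bins j]) ->
  \sum_(x in W :&: P) f x = \sum_(0 <= i < size bins) \sum_(x in nth set0 bins i :&: P) f x.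
Proof.
move=> HU HD; rewrite sumI (bins_sum _ HU HD) big_mkord.
by apply: eq_bigr => i _; rewrite sumI.
Qed.

Lemma bin_sub (W : {set X}) (bins : seq {set X}) i :
  \bigcup_(b <- bins) b = W -> (i < size bins)%N -> nth set0 bins i \subset W.
Proof.
move=> HU hi; rewrite -HU (big_nth set0) big_mkord.
exact: (bigcup_sup (Ordinal hi)).
Qed.

Lemma wr_bounds (W A B : {set X}) : (0 < #|B|)%N -> well_rep R W A B ->
  (#|A|%:R / #|W|%:R : R) / 2 * #|B|%:R <= #|B :&: A|%:R /\
  (#|B :&: A|%:R : R) <= 3%:R / 2 * (#|A|%:R / #|W|%:R) * #|B|%:R.
Proof.
rewrite /well_rep => hB /andP[h1 h2].
have hB' : (0 : R) < #|B|%:R by rewrite ltr0n.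
by split; [rewrite -ler_pdivlMr | rewrite -ler_pdivrMr].
Qed.


End Aux.

Lemma partA (R : realType) (X : finType) (rho : X -> X -> R) (ord : X -> nat) (T : {set X})
  (ordI : injective ord) (D0 : forall x, 0 <= distT rho x T) (P2 Y : {set X}) (Bb : seq {set X}) (alpha ph n : R) (k : nat) :
  0 < alpha -> alpha <= 1 / 6%:R -> 2 <= ph -> (2 <= k)%N -> 0 <= n ->
  #|P2|%:R = alpha * n -> #|Y|%:R = (1 - alpha) * n -> P2 \subset Y ->
  linear_bin_division rho (ph / 3%:R) (Y :\: far rho ord (k%:R * ph) Y T) T Bb ->
  (far_trivial (k%:R * ph) Y || well_rep R Y P2 (far rho ord (k%:R * ph) Y T)) ->
  (bin_trivial (ph / 3%:R) (Y :\: far rho ord (k%:R * ph) Y T) || bins_well_rep R Y P2 Bb) ->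
  (3%:R * alpha)^-1 * Rr rho ord (2%:R * alpha * (k.+1)%:R * ph) P2 T
    <= Rr rho ord (k%:R * ph) [set: X] T.
Proof.
move=> a0 a1 ph2 k2 n0 hP2 hY P2Y hB hF hBw.
set Fb := far rho ord (k%:R * ph) Y T.
set r2 := 2%:R * alpha * (k.+1)%:R * ph.
have K2 : (2 : R) <= k%:R by rewrite (ler_nat R 2 k).
have eK1 : (k.+1)%:R = k%:R + 1 :> R by rewrite -addn1 natrD.
have Kph0 : 0 <= k%:R * ph by apply: mulr_ge0; clear -K2 ph2; lra.
have r20 : 0 <= r2.
  rewrite /r2 eK1; apply: mulr_ge0; last (clear -ph2; lra).
  apply: mulr_ge0; last (clear -K2; lra); apply: mulr_ge0; clear -a0 K2; lra.
have RrA0 : 0 <= Rr rho ord (k%:R * ph) [set: X] T by apply: sumr_ge0.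
have ia0 : 0 < (3%:R * alpha)^-1 by rewrite invr_gt0; apply: mulr_gt0.
case: (ltrP (#|Y|%:R) (k%:R * ph + 1 + ph / 3%:R)) => hYs.
- have h1 : 0 <= (1 / 6%:R - alpha) * n by apply: mulr_ge0; clear -a1 n0; lra.
  have hn : n <= 6%:R / 5%:R * (k%:R * ph + 1 + ph / 3%:R) by clear -hY hYs h1; lra.
  have hP2r : #|P2|%:R <= r2.
    rewrite hP2; apply: (le_trans (ler_wpM2l (ltW a0) hn)).
    rewrite /r2 eK1.
    have : 6%:R / 5%:R * (k%:R * ph + 1 + ph / 3%:R) <= 2%:R * (k%:R + 1) * ph by clear -ph2 Kph0; lra.
    move=> h; have h' := ler_wpM2l (ltW a0) h; clear -h'; lra.
  rewrite /Rr far_all //; last first.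
    by rewrite -(ler_nat R); apply: le_trans hP2r (ceilN_ge r20).
  by rewrite setDv /Rcost big_set0 mulr0.
have Fnt : ~~ (#|Y|%:R < k%:R * ph) by rewrite -leNgt; clear -hYs ph2; lra.
have hFw : well_rep R Y P2 Fb by move: hF; rewrite /far_trivial (negbTE Fnt).
set N1 := `|Num.ceil (k%:R * ph)|%N.
have N1lt : N1%:R < k%:R * ph + 1 := ceilN_lt Kph0.
have N1ge : k%:R * ph <= N1%:R := ceilN_ge Kph0.
have Kph4 : 4%:R <= k%:R * ph.
  have h' := ler_pM (ler0n R 2) (ler0n R 2) K2 ph2; clear -h'; lra.
have FbY : Fb \subset Y by apply: far_sub.
have cFb : (#|Fb| <= N1)%N by apply: (far_card_le rho T ordI).
have cFb' : #|Fb|%:R <= (N1%:R : R) by rewrite ler_nat.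
have cFb_ge : (minn N1 #|Y| <= #|Fb|)%N by apply: far_card_ge.
have Fb0 : (0 < #|Fb|)%N.
  apply: leq_trans cFb_ge; rewrite leq_min; apply/andP; split.
    by rewrite -(ltr0n R); clear -N1ge Kph4; lra.
  by rewrite -(ltr0n R); clear -hYs Kph0 ph2; lra.
set W := Y :\: Fb.
have cW : #|W|%:R = #|Y|%:R - #|Fb|%:R :> R.
  by rewrite /W cardsD (setIidPr FbY) natrB //; exact: subset_leq_card.
have Wge : ph / 3%:R <= #|W|%:R by clear -cW cFb' N1lt hYs; lra.
have Wnt : ~~ (#|W|%:R < ph / 3%:R) by rewrite -leNgt.
have hBw' : bins_well_rep R Y P2 Bb by move: hBw; rewrite /bin_trivial (negbTE Wnt).
case: hB => HU [HD [Hsz [_ [[Hs0 HB0] [Hrat Hmono]]]]].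
have Bpos : forall i, (i < size Bb)%N -> (0 < #|nth set0 Bb i|)%N.
  move=> i hi; rewrite -(ltr0n R); apply: lt_le_trans (Hsz Wge i hi).
  have : (0 : R) < (i.+2)%:R by rewrite ltr0n.
  move=> h; apply: mulr_gt0; last (clear -ph2; lra).
  apply: mulr_gt0 => //; clear -ph2; lra.
have wrB : forall i, (i < size Bb)%N -> well_rep R Y P2 (nth set0 Bb i) by apply/all_nthP.
set rr := (#|P2|%:R / #|Y|%:R : R).
have Ypos : 0 < (#|Y|%:R : R) by clear -hYs Kph0 ph2; lra.
have rr_le : rr <= 6%:R / 5%:R * alpha.
  rewrite /rr ler_pdivrMr // hP2 hY.
  have a16 : 0 <= 1 / 6%:R - alpha by clear -a1; lra.
  have hh := mulr_ge0 (mulr_ge0 (ltW a0) n0) a16.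
  clear -hh; nra.
have rr0 : 0 <= rr by rewrite /rr divr_ge0.
set B0 := nth set0 Bb 0.
have hFbP2 : #|Fb :&: P2|%:R <= 3%:R / 2 * rr * #|Fb|%:R by case: (wr_bounds Fb0 hFw).
have B0pos : (0 < #|B0|)%N := Bpos 0%N Hs0.
have hB0P2 : #|B0 :&: P2|%:R <= 3%:R / 2 * rr * #|B0|%:R by case: (wr_bounds B0pos (wrB 0%N Hs0)).
set A := P2 :&: (Fb :|: B0).
have cA : (#|A| <= #|Fb :&: P2| + #|B0 :&: P2|)%N.
  rewrite /A setIUr cardsU [P2 :&: Fb]setIC [P2 :&: B0]setIC; exact: leq_subr.
have cAr : #|A|%:R <= r2.
  apply: le_trans (_ : (#|Fb :&: P2| + #|B0 :&: P2|)%:R <= r2); first by rewrite ler_nat.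
  rewrite natrD.
  have h3 : #|Fb|%:R + #|B0|%:R <= k%:R * ph + 1 + 5%:R / 2 * (ph / 3%:R) by clear -cFb' N1lt HB0; lra.
  have h4 := ler_wpM2l rr0 h3.
  have p1 : 0 <= k%:R * ph + 1 + 5%:R / 2 * (ph / 3%:R) by clear -Kph0 ph2; lra.
  have h5 := ler_wpM2r p1 rr_le.
  have p2 : 0 <= k%:R * ph / 5%:R + ph / 2 - 9%:R / 5%:R by clear -Kph4 ph2; lra.
  have h6 := mulr_ge0 (ltW a0) p2.
  rewrite /r2 eK1; clear -hFbP2 hB0P2 h4 h5 h6; lra.
have AP2 : A \subset P2 by rewrite /A subsetIl.
have N2 : (#|A| <= minn `|Num.ceil r2| #|P2|)%N.
  rewrite leq_min; apply/andP; split.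
    by rewrite -(ler_nat R); apply: le_trans cAr (ceilN_ge r20).
  exact: subset_leq_card.
have hex := sum_exch ordI D0 AP2 (leq_trans N2 (far_card_ge rho ord T _ r20)).
have eA : P2 :\: A = (W :&: P2) :\: B0.
  apply/setP => x; rewrite /A /W !inE.
  case xP: (x \in P2); rewrite ?andbF ?andbT //=.
  rewrite (subsetP P2Y x xP) /=; by case: (x \in Fb); case: (x \in B0).
rewrite eA in hex.
have B0W : B0 \subset W := bin_sub HU Hs0.
set g := fun i => \sum_(x in nth set0 Bb i :&: P2) distT rho x T.
set Rb := fun i => \sum_(x in nth set0 Bb i) distT rho x T.
have Rb0 : forall i, 0 <= Rb i by move=> i; apply: sumr_ge0.
have eW : \sum_(x in W :&: P2) distT rho x T = \sum_(0 <= i < size Bb) g i.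
  exact: bins_sumI.
have eW2 : \sum_(x in W) distT rho x T = \sum_(0 <= i < size Bb) Rb i.
  by rewrite (bins_sum _ HU HD) big_mkord.
have [L' eL] : exists L', size Bb = L'.+1 by case: (size Bb) Hs0 => // L' _; exists L'.
have eW3 : \sum_(x in (W :&: P2) :\: B0) distT rho x T = \sum_(0 <= i < L') g i.+1.
  have : \sum_(x in W :&: P2) distT rho x T = \sum_(x in W :&: P2 :&: B0) distT rho x T + \sum_(x in W :&: P2 :\: B0) distT rho x T.
    by rewrite (big_setID B0).
  have -> : W :&: P2 :&: B0 = B0 :&: P2.
    apply/setP => x; rewrite !inE; case xB: (x \in B0); rewrite ?andbF //=.
    have := subsetP B0W x xB; rewrite /W inE => /andP[-> ->].
    by rewrite andbT.
  rewrite eW eL big_nat_recl //= => e.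
  have e0 : g 0%N = \sum_(x in B0 :&: P2) distT rho x T by [].
  clear -e e0; lra.
have perbin : forall i, (i < L')%N -> g i.+1 <= 9%:R / 4%:R * rr * Rb i.
  move=> i hi.
  have hi1 : (i.+1 < size Bb)%N by rewrite eL.
  have hi0 : (i < size Bb)%N by rewrite eL ltnW.
  have Bi := Bpos i hi0.
  have Bi1 := Bpos i.+1 hi1.
  have up : #|nth set0 Bb i.+1 :&: P2|%:R <= 3%:R / 2 * rr * #|nth set0 Bb i.+1|%:R.
    by case: (wr_bounds Bi1 (wrB _ hi1)).
  have BiR : (0 : R) < #|nth set0 Bb i|%:R by rewrite ltr0n.
  have rat : (#|nth set0 Bb i.+1|%:R : R) <= 3%:R / 2 * #|nth set0 Bb i|%:R.
    by move: (Hrat i hi1); rewrite ler_pdivrMr.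
  have G := @sumG _ _ (nth set0 Bb i.+1 :&: P2) (nth set0 Bb i) (fun x => distT rho x T).
  have G' : #|nth set0 Bb i|%:R * g i.+1 <= #|nth set0 Bb i.+1 :&: P2|%:R * Rb i.
    apply: G => x y; rewrite inE => /andP[xB _] yB; exact: Hmono yB xB.
  have h1 := ler_wpM2l rr0 rat.
  have hU : #|nth set0 Bb i.+1 :&: P2|%:R <= 9%:R / 4%:R * rr * #|nth set0 Bb i|%:R by clear -up h1; lra.
  have h2 := ler_wpM2r (Rb0 i) hU.
  rewrite -(ler_pM2l BiR); clear -G' h2; lra.
have hsum : \sum_(0 <= i < L') g i.+1 <= 9%:R / 4%:R * rr * \sum_(x in W) distT rho x T.
  apply: le_trans (_ : \sum_(0 <= i < L') (9%:R / 4%:R * rr * Rb i) <= _).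
    by apply: ler_sum_nat => i /andP[_ hi]; apply: perbin.
  rewrite -mulr_sumr eW2 eL big_nat_recr //=.
  apply: ler_wpM2l; first by apply: mulr_ge0 => //; clear -rr0; lra.
  by rewrite lerDl.
have WA : W \subset [set: X] :\: far rho ord (k%:R * ph) [set: X] T.
  apply/subsetP => x; rewrite /W inE => /andP[xF xY].
  rewrite inE in_setT andbT.
  apply: far_notin => //.
    rewrite -leNgt; apply: le_trans (ltW (lt_le_trans _ hYs)) _; first (clear -ph2; lra).
    by rewrite ler_nat; apply: subset_leq_card; apply: subsetT.
  apply: leq_trans (rk_sub rho ord T x (subsetT Y)).
  move: xF; rewrite /Fb far_nt // inE xY /= -leqNgt; exact.
have hRW := sum_sub D0 WA.
rewrite /Rr /Rcost in hex hRW *.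
rewrite ler_pdivrMl; last by apply: mulr_gt0 => //; clear -a0; lra.
have RW0 : 0 <= \sum_(x in W) distT rho x T by apply: sumr_ge0.
have h7 := ler_wpM2r RW0 rr_le.
have h8 := ler_wpM2l (ltW a0) hRW.
have h9 : 0 <= alpha * \sum_(x in [set: X] :\: far rho ord (k%:R * ph) [set: X] T) distT rho x T.
  by apply: mulr_ge0; [exact: ltW | apply: sumr_ge0].
clear -hex eW3 hsum h7 h8 h9; lra.
Qed.


Lemma partB (R : realType) (X : finType) (rho : X -> X -> R) (ord : X -> nat) (T : {set X})
  (ordI : injective ord) (D0 : forall x, 0 <= distT rho x T) (P2 Y : {set X}) (Bc : seq {set X}) (alpha ph n : R) (k : nat) :
  0 < alpha -> alpha <= 1 / 6%:R -> 2 <= ph -> (2 <= k)%N -> 0 <= n ->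
  #|P2|%:R = alpha * n -> #|Y|%:R = (1 - alpha) * n -> P2 \subset Y ->
  linear_bin_division rho (ph / 3%:R) (Y :\: far rho ord (4%:R * (k.+1)%:R * ph) Y T) T Bc ->
  (far_trivial (4%:R * (k.+1)%:R * ph) Y || well_rep R Y P2 (far rho ord (4%:R * (k.+1)%:R * ph) Y T)) ->
  (bin_trivial (ph / 3%:R) (Y :\: far rho ord (4%:R * (k.+1)%:R * ph) Y T) || bins_well_rep R Y P2 Bc) ->
  9%:R^-1 * Rr rho ord (5%:R * (k.+1)%:R * ph) Y T <=
  (3%:R * alpha)^-1 * Rr rho ord (2%:R * alpha * (k.+1)%:R * ph) P2 T.
Proof.
move=> a0 a1 ph2 k2 n0 hP2 hY P2Y hB hF hBw.
set r4 := 4%:R * (k.+1)%:R * ph.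
set r5 := 5%:R * (k.+1)%:R * ph.
set r2 := 2%:R * alpha * (k.+1)%:R * ph.
set Fc := far rho ord r4 Y T.
have K3 : (3 : R) <= (k.+1)%:R by rewrite (ler_nat R 3 k.+1).
have K3ph : 3%:R * ph <= (k.+1)%:R * ph.
  have ph0 : 0 <= ph by clear -ph2; lra.
  have h' := ler_wpM2r ph0 K3; clear -h'; lra.
have Kph0 : 0 <= (k.+1)%:R * ph by clear -K3ph ph2; lra.
have r40 : 0 <= r4 by rewrite /r4 -mulrA; apply: mulr_ge0 => //; clear -Kph0; lra.
have r50 : 0 <= r5 by rewrite /r5 -mulrA; apply: mulr_ge0 => //; clear -Kph0; lra.
have r20 : 0 <= r2.
  rewrite /r2 -!mulrA; apply: mulr_ge0; first (clear; lra).
  by apply: mulr_ge0; [exact: ltW|].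
have S0 : 0 <= Rr rho ord r2 P2 T by apply: sumr_ge0.
have ia0 : 0 < 3%:R * alpha by apply: mulr_gt0 => //; clear; lra.
have psi0 : 0 <= (3%:R * alpha)^-1 * Rr rho ord r2 P2 T.
  by apply: mulr_ge0 => //; rewrite invr_ge0 ltW.
case: (ltrP (#|Y|%:R) r5) => hY5.
  by rewrite /Rr far_tr // setDv /Rcost big_set0 mulr0.
have Fnt : ~~ (#|Y|%:R < r4) by rewrite -leNgt; apply: le_trans hY5; rewrite /r4 /r5 -!mulrA; clear -Kph0; lra.
have hFw : well_rep R Y P2 Fc by move: hF; rewrite /far_trivial (negbTE Fnt).
set N4 := `|Num.ceil r4|%N.
have N4lt : N4%:R < r4 + 1 := ceilN_lt r40.
have N4ge : r4 <= N4%:R := ceilN_ge r40.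
have FcY : Fc \subset Y by apply: far_sub.
have cFc : (#|Fc| <= N4)%N by apply: (far_card_le rho T ordI).
have N4Y : (N4 <= #|Y|)%N by apply: ceilN_le => //; rewrite leNgt.
have cFc_ge : (N4 <= #|Fc|)%N.
  by have := far_card_ge rho ord T Y r40; rewrite -/Fc -/N4 (minn_idPl N4Y).
have eFc : #|Fc|%:R = N4%:R :> R by congr (_%:R); apply/eqP; rewrite eqn_leq cFc cFc_ge.
have r4pos : 0 < r4 by rewrite /r4 -mulrA; apply: mulr_gt0; clear -K3ph ph2; lra.
have Fc0 : (0 < #|Fc|)%N by rewrite -(ltr0n R) eFc; clear -N4ge r4pos; lra.
set W := Y :\: Fc.
have cW : #|W|%:R = #|Y|%:R - #|Fc|%:R :> R.
  by rewrite /W cardsD (setIidPr FcY) natrB //; exact: subset_leq_card.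
have Wge : ph / 3%:R <= #|W|%:R by move: hY5; rewrite /r4 /r5 -!mulrA in N4lt *; clear -N4lt cW eFc K3ph ph2; lra.
have Wnt : ~~ (#|W|%:R < ph / 3%:R) by rewrite -leNgt.
have hBw' : bins_well_rep R Y P2 Bc by move: hBw; rewrite /bin_trivial (negbTE Wnt).
case: hB => HU [HD [Hsz [_ [[Hs0 HB0] [Hrat Hmono]]]]].
have Bpos : forall i, (i < size Bc)%N -> (0 < #|nth set0 Bc i|)%N.
  move=> i hi; rewrite -(ltr0n R); apply: lt_le_trans (Hsz Wge i hi).
  have : (0 : R) < (i.+2)%:R by rewrite ltr0n.
  move=> h; apply: mulr_gt0; last (clear -ph2; lra).
  apply: mulr_gt0 => //; clear -ph2; lra.
have wrB : forall i, (i < size Bc)%N -> well_rep R Y P2 (nth set0 Bc i) by apply/all_nthP.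
set rr := (#|P2|%:R / #|Y|%:R : R).
have Ypos : 0 < (#|Y|%:R : R) by rewrite ltr0n; apply: leq_trans Fc0 (subset_leq_card FcY).
have rr_ge : alpha <= rr.
  rewrite /rr ler_pdivlMr // hP2 hY.
  have hh := mulr_ge0 (mulr_ge0 (ltW a0) (ltW a0)) n0.
  clear -hh; nra.
have rr0 : 0 <= rr by rewrite /rr divr_ge0.
set B0 := nth set0 Bc 0.
have hFcP2 : rr / 2 * #|Fc|%:R <= #|Fc :&: P2|%:R by case: (wr_bounds Fc0 hFw).
have cFP : r2 <= #|Fc :&: P2|%:R.
  have h1 := ler_wpM2r (ler0n R #|Fc|) rr_ge.
  have h2 := ler_wpM2l (ltW a0) N4ge.
  move: h2; rewrite -eFc /r4 /r2 => h2; clear -h1 h2 hFcP2; lra.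
have P2nt : ~~ (#|P2|%:R < r2).
  rewrite -leNgt; apply: le_trans cFP _; rewrite ler_nat.
  by apply: subset_leq_card; apply: subsetIr.
have N2le : (`|Num.ceil r2| <= #|Fc :&: P2|)%N by apply: ceilN_le.
have sub1 : P2 :\: Fc \subset P2 :\: far rho ord r2 P2 T.
  apply/subsetP => x; rewrite !inE => /andP[xF xP]; rewrite xP andbT.
  apply: far_notin => //; apply: leq_trans N2le _.
  apply: subset_leq_card; apply/subsetP => y; rewrite !inE => /andP[yF yP]; rewrite yP /=.
  by apply: (far_dom ordI yF); rewrite inE xF (subsetP P2Y x xP).
have eWP : P2 :\: Fc = W :&: P2.
  apply/setP => x; rewrite /W !inE; case xP: (x \in P2); rewrite ?andbF ?andbT //=.
  by rewrite (subsetP P2Y x xP) andbT.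
rewrite eWP in sub1.
have hS1 := sum_sub D0 sub1.
have B0W : B0 \subset W := bin_sub HU Hs0.
set g := fun i => \sum_(x in nth set0 Bc i :&: P2) distT rho x T.
set Rb := fun i => \sum_(x in nth set0 Bc i) distT rho x T.
have Rb0 : forall i, 0 <= Rb i by move=> i; apply: sumr_ge0.
have g0 : forall i, 0 <= g i by move=> i; apply: sumr_ge0.
have eW : \sum_(x in W :&: P2) distT rho x T = \sum_(0 <= i < size Bc) g i.
  exact: bins_sumI.
have eW2 : \sum_(x in W) distT rho x T = \sum_(0 <= i < size Bc) Rb i.
  by rewrite (bins_sum _ HU HD) big_mkord.
have [L' eL] : exists L', size Bc = L'.+1 by case: (size Bc) Hs0 => // L' _; exists L'.
have perbin : forall i, (i < L')%N -> rr / 3%:R * Rb i.+1 <= g i.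
  move=> i hi.
  have hi1 : (i.+1 < size Bc)%N by rewrite eL.
  have hi0 : (i < size Bc)%N by rewrite eL ltnW.
  have Bi := Bpos i hi0.
  have Bi1 := Bpos i.+1 hi1.
  have low : rr / 2 * #|nth set0 Bc i|%:R <= #|nth set0 Bc i :&: P2|%:R.
    by case: (wr_bounds Bi (wrB _ hi0)).
  have Bi1R : (0 : R) < #|nth set0 Bc i.+1|%:R by rewrite ltr0n.
  have rat : (#|nth set0 Bc i.+1|%:R : R) <= 3%:R / 2 * #|nth set0 Bc i|%:R.
    by move: (Hrat i hi1); rewrite ler_pdivrMr // ltr0n.
  have G := @sumG _ _ (nth set0 Bc i.+1) (nth set0 Bc i :&: P2) (fun x => distT rho x T).
  have G' : #|nth set0 Bc i :&: P2|%:R * Rb i.+1 <= #|nth set0 Bc i.+1|%:R * g i.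
    apply: G => x y xB; rewrite inE => /andP[yB _]; exact: Hmono yB xB.
  have h1 := ler_wpM2l rr0 rat.
  have hU : rr / 3%:R * #|nth set0 Bc i.+1|%:R <= #|nth set0 Bc i :&: P2|%:R by clear -h1 low; lra.
  have h2 := ler_wpM2r (Rb0 i.+1) hU.
  rewrite -(ler_pM2l Bi1R); clear -G' h2; lra.
have hsum : rr / 3%:R * \sum_(x in W :\: B0) distT rho x T <= \sum_(x in W :&: P2) distT rho x T.
  have e1 := sum_splitS (fun x => distT rho x T) B0W.
  have e2 : \sum_(x in W) distT rho x T = Rb 0%N + \sum_(0 <= i < L') Rb i.+1.
    by rewrite eW2 eL big_nat_recl.
  have e3 : \sum_(x in B0) distT rho x T = Rb 0%N by [].
  have e4 : \sum_(x in W :\: B0) distT rho x T = \sum_(0 <= i < L') Rb i.+1 by clear -e1 e2 e3; lra.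
  rewrite e4 eW eL big_nat_recr //= mulr_sumr.
  apply: le_trans (_ : \sum_(0 <= i < L') g i <= _); last by rewrite lerDl.
  by apply: ler_sum_nat => i /andP[_ hi]; apply: perbin.
set A := Fc :|: B0.
have AY : A \subset Y.
  rewrite /A subUset FcY /=; apply: subset_trans B0W _; exact: subsetDl.
have B0le : #|B0|%:R <= 5%:R / 2 * (ph / 3%:R) by [].
have cA : (#|A| <= minn `|Num.ceil r5| #|Y|)%N.
  rewrite leq_min (subset_leq_card AY) andbT.
  have cA1 : (#|A| <= #|Fc| + #|B0|)%N by rewrite /A cardsU leq_subr.
  rewrite -(ler_nat R); apply: le_trans (ceilN_ge r50).
  apply: le_trans (_ : (#|Fc| + #|B0|)%:R <= r5); first by rewrite ler_nat.
  rewrite natrD eFc; move: N4lt; rewrite /r4 /r5 -!mulrA => h; clear -h B0le K3ph ph2; lra.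
have hex := sum_exch ordI D0 AY (leq_trans cA (far_card_ge rho ord T _ r50)).
have eYA : Y :\: A = W :\: B0.
  apply/setP => x; rewrite /A /W !inE.
  by case: (x \in Fc); case: (x \in B0); case: (x \in Y).
rewrite eYA in hex.
rewrite /Rr /Rcost in hex hS1 *.
rewrite ler_pdivlMl //.
have WB0 : 0 <= \sum_(x in W :\: B0) distT rho x T by apply: sumr_ge0.
have h7 := ler_wpM2r WB0 rr_ge.
have h8 := ler_wpM2l (ltW a0) hex.
clear -hex hS1 hsum h7 h8; lra.
Qed.


Lemma ph_ge2 (R : realType) (k : nat) (delta alpha : R) : (2 <= k)%N -> 0 < delta < 1 ->
  0 < alpha <= 1 / 6%:R -> 2 <= phi k delta alpha.
Proof.
move=> k2 /andP[d0 d1] /andP[a0 a1].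
rewrite /phi.
set x := 32%:R * k%:R / delta.
have hk : (2 : R) <= k%:R by rewrite (ler_nat R 2 k).
have x2 : 2 <= x by rewrite /x ler_pdivlMr //; nra.
have x0 : 0 < x by apply: lt_le_trans x2.
have hi : x^-1 <= 2^-1 by rewrite lef_pV2 ?posrE //.
have hl : ln (1 + (x^-1 - 1)) <= x^-1 - 1.
  by apply: le_ln1Dx; rewrite ltrBrDl addrN invr_gt0.
move: hl; rewrite addrC subrK lnV ?posrE // => hl.
have hL : 1 / 2 <= ln x.
  have : (2:R)^-1 = 1/2 by rewrite div1r.
  lra.
rewrite ler_pdivlMr //.
have : alpha <= 1/6 by [].
lra.
Qed.

Theorem lemma8 (R : realType) (X : finType) (rho : X -> X -> R)
  (ord : X -> nat) (k : nat) (delta alpha : R) (P1 P2 T : {set X})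
  (Bb Bc : seq {set X}) :
  is_metric rho ->
  injective ord ->
  (2 <= k)%N ->
  0 < delta < 1 ->
  0 < alpha <= 1 / 6%:R ->
  (exists m : nat, alpha * #|X|%:R = m%:R) ->
  [disjoint P1 & P2] ->
  #|P1|%:R = alpha * #|X|%:R ->
  #|P2|%:R = alpha * #|X|%:R ->
  T != set0 ->
  let ph := phi k delta alpha in
  let psi := (3%:R * alpha)^-1 * Rr rho ord (2%:R * alpha * (k.+1)%:R * ph) P2 T in
  let Y := ~: P1 in
  let Fb := far rho ord (k%:R * ph) Y T in
  let Fc := far rho ord (4%:R * (k.+1)%:R * ph) Y T in
  linear_bin_division rho (ph / 3%:R) (Y :\: Fb) T Bb ->
  linear_bin_division rho (ph / 3%:R) (Y :\: Fc) T Bc ->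
  ((far_trivial (k%:R * ph) Y || well_rep R Y P2 Fb) ->
   (bin_trivial (ph / 3%:R) (Y :\: Fb) || bins_well_rep R Y P2 Bb) ->
   psi <= Rr rho ord (k%:R * ph) [set: X] T)
  /\
  ((far_trivial (4%:R * (k.+1)%:R * ph) Y || well_rep R Y P2 Fc) ->
   (bin_trivial (ph / 3%:R) (Y :\: Fc) || bins_well_rep R Y P2 Bc) ->
   9%:R^-1 * Rr rho ord (5%:R * (k.+1)%:R * ph) Y T <= psi).
Proof.
move=> met ordI k2 hd /andP[a0 a1] [m hm] dis hP1 hP2 Tn0 ph psi Y Fb Fc hBb hBc.
have D0 : forall x, 0 <= distT rho x T.
  move=> x; rewrite /distT; case: pickP => [y0 _|_ //].
  case: met => h0 _ _ _.
  apply: (@big_ind R (fun v => 0 <= v)) => [|a b ha hb|y _]; [exact: h0 | by rewrite le_min ha hb | exact: h0].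
have ph2 : 2 <= ph by apply: ph_ge2 => //; rewrite a0 a1.
have P2Y : P2 \subset Y by rewrite /Y -disjoints_subset disjoint_sym.
have hY : #|Y|%:R = (1 - alpha) * #|X|%:R.
  have e := cardsC P1.
  have e' : (#|P1|%:R + #|Y|%:R : R) = #|X|%:R by rewrite -natrD e.
  clear -e' hP1; lra.
split.
- move=> hF hB.
  exact: (partA ordI D0 a0 a1 ph2 k2 (ler0n _ _) hP2 hY P2Y hBb hF hB).
- move=> hF hB.
  exact: (partB ordI D0 a0 a1 ph2 k2 (ler0n _ _) hP2 hY P2Y hBc hF hB).
Qed.
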